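(* Let $n\ge 2$. Let $\hat a_{i,i-1}>0$ and $\hat b_{i,i-1}\in\mathbb{R}$ for $2\le i\le n$; for $1\le m\le k\le n$ put $\hat a_{k,m}:=\prod_{i=m+1}^{k}\hat a_{i,i-1}$ (so $\hat a_{k,k}=1$) and $\hat b_{n,1}:=\sum_{k=2}^{n}\hat a_{n,k}\hat b_{k,k-1}$. Define $i^*$: if $\min_{2\le k\le n}\hat a_{k,1}\le1$, let $i^*\in\{2,\ldots,n\}$ be an index attaining this minimum; otherwise $i^*=1$. Let $\tau^1(t)=a_1t+b_1$ and $\tau^n(t)=a_nt+b_n$ with $a_1,a_n>0$, and set $a_{n,1}:=a_n/a_1$, $b_{n,1}:=b_n-a_{n,1}b_1$ (so $\tau^n(t)=a_{n,1}\tau^1(t)+b_{n,1}$ for all $t$). Let $t_1\le t_n$ be reals, and let $R_1:=\tau^1(t_1)$, $L_n:=\tau^n(t_n)$, and let $L_i$ ($2\le i\le n-1$) and $R_i$ ($2\le i\le n-1$) be reals such that $L_i=\hat a_{i,i-1}R_{i-1}+\hat b_{i,i-1}$ for all $2\le i\le n$ and $L_i\le R_i$ for $2\le i\le n-1$. Then $$\sum_{j=2}^{n-1}\bigl(R_j-L_j\bigr)\ge\frac{a_{n,1}-\hat a_{n,1}}{\hat a_{n,i^*}}\,R_1+\frac{b_{n,1}-\hat b_{n,1}}{\hat a_{n,i^*}}.$$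
   Context: Setting: a chain of nodes $1,\ldots,n$ whose endpoints $1$ and $n$ are good nodes with affine local clocks $\tau^1,\tau^n$ of the reference time $t$; node $1$ sends a timing packet at reference time $t_1$ (send time-stamp $R_1$) and node $n$ receives it at reference time $t_n\ge t_1$ (receive time-stamp $L_n$). Intermediate nodes $i$ append a receive time-stamp $L_i=\tau^{i,l}(t_{i,l})$ and a send time-stamp $R_i=\tau^{i,r}(t_{i,r})$ from arbitrary clocks; $R_j-L_j$ is node $j$'s forwarding delay. $\hat a_{i,i-1},\hat b_{i,i-1}$ are declared relative skews/offsets, $a_{n,1},b_{n,1}$ the true relative skew/offset of node $n$ with respect to node $1$. *)

(* Defs.v *)
From mathcomp Require Import all_boot all_order all_algebra.
Set Implicit Arguments. Unset Strict Implicit. Unset Printing Implicit Defensive.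
Import Order.TTheory GRing.Theory Num.Theory.
Local Open Scope ring_scope.

(* ahat i stands for \hat a_{i,i-1}, bhat i for \hat b_{i,i-1} (2 <= i <= n). *)

Definition ahat_km {R : realFieldType} (ahat : nat -> R) (k m : nat) : R :=
  \prod_(m.+1 <= i < k.+1) ahat i.

Definition bhat_n1 {R : realFieldType} (ahat bhat : nat -> R) (n : nat) : R :=
  \sum_(2 <= k < n.+1) ahat_km ahat n k * bhat k.

(* Main.v *)
Require Import Defs.
From mathcomp Require Import all_boot all_order all_algebra.
From mathcomp Require Import ring lra zify.
Import Order.TTheory GRing.Theory Num.Theory.
Set Implicit Arguments. Unset Strict Implicit.
Local Open Scope ring_scope.

Lemma ak_split (R : realFieldType) (a : nat -> R) p m k :
  (p <= m <= k)%N -> ahat_km a k p = ahat_km a k m * ahat_km a m p.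
Proof.
by move=> /andP[h1 h2]; rewrite /ahat_km (big_cat_nat _ (n:=m.+1)) ?ltnS // mulrC.
Qed.

Lemma ak_pos (R : realFieldType) (a : nat -> R) n m k :
  (forall i, (2 <= i <= n)%N -> 0 < a i) ->
  (1 <= m)%N -> (k <= n)%N -> 0 < ahat_km a k m.
Proof.
move=> Hp h1 h2; rewrite /ahat_km big_nat_cond; apply: prodr_gt0 => i.
move=> /andP[/andP[i1 i2] _]; apply: Hp; lia.
Qed.

Lemma ak_rec (R : realFieldType) (a : nat -> R) m k :
  (m <= k)%N -> ahat_km a k.+1 m = a k.+1 * ahat_km a k m.
Proof. by move=> h; rewrite /ahat_km big_nat_recr //= mulrC. Qed.

Lemma ak_id (R : realFieldType) (a : nat -> R) k : ahat_km a k k = 1.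
Proof. by rewrite /ahat_km big_geq. Qed.

Theorem lemma5 (R : realFieldType) (n : nat) (ahat bhat : nat -> R)
    (istar : nat) (a1 b1 an bn t1 tn : R) (L Rs : nat -> R) :
  (2 <= n)%N ->
  (forall i, (2 <= i <= n)%N -> 0 < ahat i) ->
  (* definition of i^* *)
  ( ((2 <= istar <= n)%N /\
     (forall k, (2 <= k <= n)%N -> ahat_km ahat istar 1 <= ahat_km ahat k 1) /\
     ahat_km ahat istar 1 <= 1)
    \/
    ((forall k, (2 <= k <= n)%N -> 1 < ahat_km ahat k 1) /\ istar = 1%N) ) ->
  0 < a1 -> 0 < an ->
  t1 <= tn ->
  Rs 1%N = a1 * t1 + b1 ->
  L n = an * tn + bn ->
  (forall i, (2 <= i <= n)%N -> L i = ahat i * Rs i.-1 + bhat i) ->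
  (forall i, (2 <= i <= n.-1)%N -> L i <= Rs i) ->
  \sum_(2 <= j < n) (Rs j - L j) >=
    (an / a1 - ahat_km ahat n 1) / ahat_km ahat n istar * Rs 1%N
    + (bn - an / a1 * b1 - bhat_n1 ahat bhat n) / ahat_km ahat n istar.
Proof.
move=> Hn Hp Hi Ha1 Han Ht HR1 HLn HL Hd.
have Htel : forall k, (2 <= k <= n)%N ->
  L k = ahat_km ahat k 1 * Rs 1%N + \sum_(2 <= m < k.+1) ahat_km ahat k m * bhat m
        + \sum_(2 <= j < k) ahat_km ahat k j * (Rs j - L j).
  elim=> [|k IH]; first by [].
  move=> /andP[hk1 hk2].
  case: (ltnP 2 k.+1) => hk.
  - rewrite HL; last by apply/andP.
    rewrite /= -[Rs k](subrK (L k)); set d := Rs k - L k.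
    rewrite IH; last by apply/andP; split; lia.
    rewrite [in RHS](big_nat_recr k 2); last lia.
    rewrite [in RHS](big_nat_recr k.+1 2); last lia.
    rewrite /=.
    have E1 : \sum_(2 <= m < k.+1) ahat_km ahat k.+1 m * bhat m
        = ahat k.+1 * \sum_(2 <= m < k.+1) ahat_km ahat k m * bhat m.
      rewrite mulr_sumr; apply: eq_big_nat => i /andP[_ hi].
      rewrite ak_rec; [by rewrite mulrA | lia].
    have E2 : \sum_(2 <= m < k) ahat_km ahat k.+1 m * (Rs m - L m)
        = ahat k.+1 * \sum_(2 <= m < k) ahat_km ahat k m * (Rs m - L m).
      rewrite mulr_sumr; apply: eq_big_nat => i /andP[_ hi].
      rewrite ak_rec; [by rewrite mulrA | lia].
    rewrite E1 E2 (@ak_rec _ ahat 1%N k) // (@ak_rec _ ahat k k) // !ak_id /d; ring.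
  - have ek : k = 1%N by lia.
    subst k.
    rewrite HL; last by apply/andP.
    rewrite /= /ahat_km !big_nat1 big_geq // big_geq //; ring.
set A := ahat_km ahat n istar.
have hi1 : (1 <= istar)%N by case: Hi => [[h _]|[_ ->]] //; lia.
have HA : 0 < A := ak_pos Hp hi1 (leqnn n).
set S := \sum_(2 <= j < n) (Rs j - L j).
set T := \sum_(2 <= j < n) ahat_km ahat n j * (Rs j - L j).
have HT : T <= A * S.
  rewrite /S mulr_sumr; apply: ler_sum_nat => j /andP[j1 j2].
  have dj : 0 <= Rs j - L j by rewrite subr_ge0; apply: Hd; apply/andP; split; lia.
  apply: ler_wpM2r => //.
  have Anj := ak_pos Hp (m:=j) (k:=n) (ltnW j1) (leqnn n).
  have Aj1 := ak_pos Hp (m:=1) (k:=j) (leqnn 1) (ltnW j2).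
  have e1 : ahat_km ahat n 1 = ahat_km ahat n j * ahat_km ahat j 1.
    by apply: ak_split; apply/andP; split; lia.
  case: Hi => [[hi [hmin _]]|[hgt ei]].
  + have Ai1 : 0 < ahat_km ahat istar 1 by apply: (ak_pos Hp) => //; lia.
    have e2 : ahat_km ahat n 1 = A * ahat_km ahat istar 1.
      by apply: ak_split; apply/andP; split; lia.
    have hm : ahat_km ahat istar 1 <= ahat_km ahat j 1 by apply: hmin; lia.
    have h3 : ahat_km ahat n j * ahat_km ahat j 1 <= A * ahat_km ahat j 1.
      by rewrite -e1 e2 ler_wpM2l // ltW.
    by rewrite ler_pM2r in h3.
  + have h1 : 1 < ahat_km ahat j 1 by apply: hgt; lia.
    rewrite /A ei e1; nra.
have Htn := Htel n ltac:(by rewrite Hn leqnn).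
rewrite HLn -/T in Htn.
rewrite !(mulrAC _ (A^-1)) -mulrDl ler_pdivrMr //.
set q := an / a1.
have hq : q * a1 = an by rewrite /q mulrVK // unitfE gt_eqF.
have hq2 : q * Rs 1%N = an * t1 + q * b1 by rewrite HR1 mulrDr mulrA hq.
have ht : an * t1 <= an * tn by rewrite ler_pM2l.
rewrite /bhat_n1.
lra.
Qed.
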